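(* For all integers $h \ge 2$, we have $(h+1)^2 \in \mathcal{R}_{\mathbf{Z}}(h,4)$, and for all integers $i_0 \in [0,h-2]$ and $r \in [0,1]$, \[ (i_0+1)\big(2(h-i_0) - r\big) + (h-i_0)^2 \in \mathcal{R}_{\mathbf{Z}}(h,4). \]
   Context: For a positive integer $h$ and a finite set $A$ of integers, $hA$ denotes the set of all sums $a_1+\cdots+a_h$ with $a_1,\ldots,a_h \in A$ (not necessarily distinct). The sumset size set is $\mathcal{R}_{\mathbf{Z}}(h,k) = \{ |hA| : A \subseteq \mathbf{Z},\ |A| = k\}$. For real $u,v$, $[u,v] = \{n \in \mathbf{Z} : u \le n \le v\}$. *)

(* Defs.v *)
From mathcomp Require Import all_boot all_order all_algebra.
Set Implicit Arguments. Unset Strict Implicit. Unset Printing Implicit Defensive.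
Import Order.TTheory GRing.Theory Num.Theory.
Local Open Scope ring_scope.

(* h-fold sumset hA of a finite set A of integers (given as a duplicate-free
   list), returned as a list (possibly with repetitions) of all sums
   a_1 + ... + a_h with a_i in A. *)
Fixpoint sumset (h : nat) (A : seq int) : seq int :=
  match h with
  | O => [:: 0]
  | S h' => [seq a + s | a <- A, s <- sumset h' A]
  end.

Definition card_sumset (h : nat) (A : seq int) : nat := size (undup (sumset h A)).

Definition in_RZ (h k m : nat) : Prop :=
  exists A : seq int, uniq A /\ size A = k /\ card_sumset h A = m.

(* Main.v *)
Require Import Defs.
From mathcomp Require Import all_boot all_order all_algebra zify.
Import Order.TTheory GRing.Theory Num.Theory.

Lemma mem_sumset (c h : nat) (s : int) :
  s \in sumset h [:: 0%R; 1%R; 2%R; (c : int)] <->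
  exists x y : nat, (x <= h)%N /\ (y <= 2 * (h - x))%N /\ s = Posz (y + x * c)%N.
Proof.
elim: h s => [|h IH] s.
  rewrite /= inE; split.
    by move/eqP=> ->; exists 0%N, 0%N.
  move=> [x [y [hx [hy ->]]]].
  have -> : x = 0%N by lia.
  have -> : y = 0%N by lia.
  by [].
split.
  move/allpairsP => [[a t] /= [ha ht ->]].
  have [x [y [hx [hy ->]]]] := (IH t).1 ht.
  move: ha; rewrite !inE => /or4P [] /eqP ->.
  - by exists x, y; split; [lia|split; [lia|]]; rewrite add0r.
  - exists x, y.+1; split; [lia|split; [lia|]].
    rewrite -[1%R]/(1%N : int) -PoszD; congr Posz; lia.
  - exists x, y.+2; split; [lia|split; [lia|]].
    rewrite -[2%R]/(2%N : int) -PoszD; congr Posz; lia.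
  - exists x.+1, y; split; [lia|split; [lia|]].
    rewrite -PoszD; congr Posz; lia.
move=> [x [y [hx [hy ->]]]].
apply/allpairsP.
have [xh|xh] := leqP x h.
  case: y hy => [|[|y]] hy.
  - exists (0%R, Posz (0 + x * c)%N) => /=; split; rewrite ?inE ?eqxx //.
      by apply/(IH _).2; exists x, 0%N; split; [lia|split;[lia|]].
  - exists (1%R, Posz (0 + x * c)%N) => /=; split; rewrite ?inE ?eqxx ?orbT //.
      by apply/(IH _).2; exists x, 0%N; split; [lia|split;[lia|]].
  - exists (2%R, Posz (y + x * c)%N) => /=; split; rewrite ?inE ?eqxx ?orbT //.
      by apply/(IH _).2; exists x, y; split; [lia|split;[lia|]].
have ex : x = h.+1 by lia.
have ey : y = 0%N by lia.
subst.
exists ((c:int), Posz (0 + h * c)%N) => /=; split; rewrite ?inE ?eqxx ?orbT //.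
  by apply/(IH _).2; exists h, 0%N; split; [lia|split;[lia|]].
Qed.

Definition Pc (h c n : nat) : bool :=
  has (fun x => (x * c <= n) && (n - x * c <= 2 * (h - x)))%N (iota 0 h.+1).

Lemma card_eq (c h : nat) : (2 <= c)%N ->
  card_sumset h [:: 0%R; 1%R; 2%R; (c : int)] = count (Pc h c) (iota 0 (h.+1 * c)).
Proof.
move=> hc.
rewrite /card_sumset -size_filter.
rewrite -(size_map Posz).
apply: perm_size.
apply: uniq_perm; first exact: undup_uniq.
  rewrite map_inj_uniq; last by move=> a b [].
  by apply: filter_uniq; apply: iota_uniq.
move=> z; rewrite mem_undup.
apply/idP/idP.
  move/(mem_sumset c h z) => [x [y [hx [hy ->]]]].
  apply: map_f; rewrite mem_filter mem_iota; apply/andP; split.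
    apply/hasP; exists x; first by rewrite mem_iota; lia.
    apply/andP; split; lia.
  have H1 : ((h - x) * 2 <= (h - x) * c)%N by apply: leq_mul.
  have H2 : ((h - x) * c + x * c = h * c)%N by rewrite -mulnDl subnK.
  rewrite mulSn; lia.
move/mapP => [n]; rewrite mem_filter => /andP [/hasP [x]].
rewrite mem_iota => hx /andP [h1 h2] _ ->.
apply/(mem_sumset c h _).2; exists x, (n - x * c)%N; split; [lia|split;[lia|]].
congr Posz; lia.
Qed.

Lemma count_le (k c : nat) : count (fun i => (i <= k)%N) (iota 0 c) = minn c k.+1.
Proof.
elim: c => [|c IH]; first by [].
rewrite -addn1 iotaD count_cat IH /=; lia.
Qed.

Lemma count_block (c h q : nat) : (2 <= c)%N -> (q <= h)%N ->
  count (Pc h c) (iota (q * c) c) = minn c (2 * (h - q)).+1.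
Proof.
move=> hc hq.
rewrite -(addn0 (q * c)) iotaDl count_map -count_le.
apply: eq_in_count => i; rewrite mem_iota => /andP [_ hi] /=.
apply/hasP/idP.
  move=> [x]; rewrite mem_iota => hx /andP [h1 h2].
  have xq : (x <= q)%N.
    rewrite leqNgt; apply/negP => qx.
    have : (q.+1 * c <= x * c)%N by apply: leq_mul.
    lia.
  have [d Hd] : exists d, q = (x + d)%N by exists (q - x)%N; lia.
  have : (d * 2 <= d * c)%N by apply: leq_mul.
  have E : (q * c = x * c + d * c)%N by rewrite Hd mulnDl.
  lia.
move=> hi2; exists q; first by rewrite mem_iota; lia.
apply/andP; split; lia.
Qed.

Lemma count_all (c h Q : nat) : (2 <= c)%N -> (Q <= h.+1)%N ->
  count (Pc h c) (iota 0 (Q * c)) = (\sum_(0 <= q < Q) minn c (2 * (h - q)).+1)%N.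
Proof.
move=> hc; elim: Q => [|Q IH] hQ; first by rewrite big_geq.
rewrite big_nat_recr //= mulSn addnC iotaD count_cat IH; last lia.
by rewrite add0n count_block //; lia.
Qed.

Lemma sum_rev (c h : nat) :
  (\sum_(0 <= q < h.+1) minn c (2 * (h - q)).+1)%N =
  (\sum_(0 <= j < h.+1) minn c (2 * j).+1)%N.
Proof.
rewrite big_nat_rev /=; apply: eq_big_nat => i hi; congr minn; lia.
Qed.

Lemma sum_L1 (c m : nat) : (2 * m <= c.+1)%N ->
  (\sum_(0 <= j < m) minn c (2 * j).+1)%N = (m ^ 2)%N.
Proof.
elim: m => [|m IH] hm; first by rewrite big_geq.
rewrite big_nat_recr //= IH; last lia.
rewrite !expnS !expn0; lia.
Qed.

Lemma sum_L2 (c n k : nat) : (2 * n <= c.+1)%N -> (c <= (2 * n).+1)%N ->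
  (\sum_(0 <= j < n + k) minn c (2 * j).+1)%N = (n ^ 2 + k * c)%N.
Proof.
move=> h1 h2; elim: k => [|k IH]; first by rewrite addn0 sum_L1 // mul0n addn0.
rewrite addnS big_nat_recr //= IH mulSn; lia.
Qed.

Lemma card_final (c h : nat) : (2 <= c)%N ->
  card_sumset h [:: 0%R; 1%R; 2%R; (c : int)] =
  (\sum_(0 <= j < h.+1) minn c (2 * j).+1)%N.
Proof. by move=> hc; rewrite card_eq // count_all // sum_rev. Qed.

Lemma uniqA (c : nat) : (3 <= c)%N -> uniq [:: 0%R; 1%R; 2%R; (c : int)] /\ size [:: 0%R; 1%R; 2%R; (c : int)] = 4%N.
Proof.
move=> hc; split => //=.
rewrite !inE /=.
have : (c : int) != 0%R by lia.
have : (c : int) != 1%R by lia.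
have : (c : int) != 2%R by lia.
by rewrite !(eq_sym _ (Posz c)) => -> -> ->.
Qed.

Theorem mainTheorem8 (h : nat) : (2 <= h)%N ->
  in_RZ h 4 ((h + 1) ^ 2)%N /\
  (forall i0 r : nat, (i0 <= h - 2)%N -> (r <= 1)%N ->
     in_RZ h 4 ((i0 + 1) * (2 * (h - i0) - r) + (h - i0) ^ 2)%N).
Proof.
move=> h2; split.
  exists [:: 0%R; 1%R; 2%R; ((2 * h).+1 : int)].
  have [u s] := uniqA (2 * h).+1 ltac:(lia).
  split => //; split => //.
  rewrite card_final; last lia.
  rewrite sum_L1; last lia.
  by rewrite addn1.
move=> i0 r hi hr.
set c := (2 * (h - i0) - r)%N.
exists [:: 0%R; 1%R; 2%R; (c : int)].
have [u s] := uniqA c ltac:(rewrite /c; lia).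
split => //; split => //.
rewrite card_final; last by rewrite /c; lia.
have -> : h.+1 = ((h - i0) + (i0 + 1))%N by lia.
rewrite sum_L2; [|rewrite /c; lia|rewrite /c; lia].
by rewrite addnC.
Qed.
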